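(* Let $\mathcal{M}$ be the set of compactly supported probability distributions on $\mathbb{R}$ (identified with their cdfs). A mapping $T:\mathcal{M}\to\mathcal{M}$ satisfies $T\circ T^u=T^u\circ T$ for every utility function $u$ if and only if $T=T_d$ for some distortion function $d$.
   Context: Increasing means non-decreasing. A distortion function is an increasing function $d:[0,1]\to[0,1]$ with $d(0)=0$ and $d(1)=1$ (not necessarily continuous). A utility function is an increasing continuous function $u:\mathbb{R}\to\mathbb{R}$. For a distortion function $d$, the probability distortion $T_d:\mathcal{M}\to\mathcal{M}$ is defined by $T_d(F)(x)=\lim_{y\downarrow x} d(F(y))$ for $x\in\mathbb{R}$. For a utility function $u$, the utility transform $T^u:\mathcal{M}\to\mathcal{M}$ maps the distribution of a random variable $X$ to the distribution of $u(X)$, i.e. $T^u(F)=F\circ u^{-1}$ with $F$ viewed as a measure. *)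

(* Defs.v *)
From HB Require Import structures.
From mathcomp Require Import all_boot all_order all_algebra.
From mathcomp Require Import all_classical all_reals all_analysis.
Set Implicit Arguments. Unset Strict Implicit. Unset Printing Implicit Defensive.
Import Order.TTheory GRing.Theory Num.Theory.
Import numFieldNormedType.Exports.
Local Open Scope classical_set_scope.
Local Open Scope ring_scope.

Section Defs.
Variable R : realType.

Definition in_M (F : R -> R) : Prop :=
  {homo F : x y / x <= y} /\
  (forall x, F @ x^'+ --> F x) /\
  exists a b : R, (forall x, x < a -> F x = 0) /\ (forall x, b <= x -> F x = 1).

Definition utility (u : R -> R) : Prop :=
  {homo u : x y / x <= y} /\ continuous u.

(* distortion function d : [0,1] -> [0,1], increasing, d 0 = 0, d 1 = 1
   (values outside [0,1] are irrelevant) *)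
Definition distortion (d : R -> R) : Prop :=
  {in `[0, 1] &, {homo d : x y / x <= y}} /\
  (forall p, p \in `[0, 1] -> d p \in `[0, 1]) /\
  d 0 = 0 /\ d 1 = 1.

Definition Td (d : R -> R) (F : R -> R) : R -> R :=
  fun x => lim ((d \o F) @ x^'+).

(* utility transform: cdf of u(X) when X has cdf F, i.e.
   x |-> P(u(X) <= x) = P(X \in u^{-1}(-oo, x]).  Since u is increasing and
   continuous, u^{-1}(-oo,x] is a closed down-set of R, whose F-probability is
   the supremum of F over it (0 if it is empty). *)
Definition Tu (u : R -> R) (F : R -> R) : R -> R :=
  fun x => sup ([set 0] `|` (F @` [set t | u t <= x])).

End Defs.

(* Main.v *)
Require Import Defs.
From HB Require Import structures.
From mathcomp Require Import all_boot all_order all_algebra.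
From mathcomp Require Import all_classical all_reals all_analysis.
From mathcomp Require Import lra.
Import Order.TTheory GRing.Theory Num.Theory.
Import numFieldNormedType.Exports.
Local Open Scope classical_set_scope.
Local Open Scope ring_scope.

Lemma ltnotP (R : realDomainType) (a b : R) : ~~ (a < b) -> b <= a.
Proof. by rewrite -leNgt. Qed.
Lemma lenotP (R : realDomainType) (a b : R) : ~~ (a <= b) -> b < a.
Proof. by rewrite -ltNge. Qed.
Ltac splitif := repeat match goal with |- context[if ?b then _ else _] =>
  let h := fresh "h" in case: (boolP b) => h;
  [|first [move/ltnotP: h => h | move/lenotP: h => h | idtac]] end.

Section Aux.
Set Implicit Arguments.
Variable R : realType.
Implicit Types (F G : R -> R) (u : R -> R) (x y z t s c L p q k : R).

Definition rlim (f : R -> R) (t l : R) := forall e : R, 0 < e ->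
  exists2 d : R, 0 < d & forall y, t < y -> y < t + d -> `|f y - l| < e.

Lemma rlimP f t l : rlim f t l <-> f @ t^'+ --> l.
Proof.
split.
- move=> H; apply/cvgrPdist_lt => e e0.
  have [d d0 Hd] := H e e0.
  near=> y; rewrite distrC; apply: Hd.
  + by near: y; exact: nbhs_right_gt.
  + by near: y; apply: nbhs_right_lt; rewrite ltrDl.
- move=> /cvgrPdist_lt H e e0.
  have := H e e0; rewrite near_withinE => H1. move: H1 => /nbhs_ballP [d /= d0 Hd].
  exists d => // y ty yd; rewrite distrC; apply: Hd => //.
  rewrite /ball /= distrC ger0_norm; first lra.
  by rewrite subr_ge0 ltW.
Unshelve. all: by end_near. Qed.

Lemma cont_ed u c : continuous u -> forall e, 0 < e ->
  exists2 d : R, 0 < d & forall s, `|c - s| < d -> `|u c - u s| < e.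
Proof.
move=> uc e e0.
have H1 := (cvgrPdist_lt _ _).1 (uc c) e e0.
move: (H1 (nbhs_filter c)) => /nbhs_ballP [d /= d0 Hd]; exists d => // s cs; exact: Hd.
Qed.

Lemma inM01 F : in_M F -> forall t, 0 <= F t /\ F t <= 1.
Proof.
move=> [mo [rc [a [b [Ha Hb]]]]] t; split.
- rewrite -(Ha (Num.min t (a - 1))); last by rewrite gt_min; apply/orP; right; lra.
  by apply: mo; rewrite ge_min lexx.
- rewrite -(Hb (Num.max t b)); last by rewrite le_max lexx orbT.
  by apply: mo; rewrite le_max lexx.
Qed.


Definition Tset F u z : set R := [set 0] `|` (F @` [set t | u t <= z]).

Lemma TuE F u z : Tu u F z = sup (Tset F u z).
Proof. by []. Qed.

Lemma Tset_ub F u z : in_M F -> ubound (Tset F u z) 1.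
Proof.
move=> FM e [->|[t _ <-]]; first by [].
by case: (inM01 FM t).
Qed.

Lemma Tset_hub F u z : in_M F -> has_ubound (Tset F u z).
Proof. by move=> FM; exists 1; apply: Tset_ub. Qed.

Lemma Tset_n0 F u z : Tset F u z !=set0.
Proof. by exists 0; left. Qed.

Lemma Tu_ge0 F u z : in_M F -> 0 <= Tu u F z.
Proof. by move=> FM; rewrite TuE; apply: (ub_le_sup (Tset_hub u z FM)); left. Qed.

Lemma Tu_le1 F u z : in_M F -> Tu u F z <= 1.
Proof. by move=> FM; rewrite TuE; apply: ge_sup; [apply: Tset_n0|apply: Tset_ub]. Qed.

Lemma Tu_lower F u z c : in_M F -> u c <= z -> F c <= Tu u F z.
Proof.
by move=> FM uc; rewrite TuE; apply: (ub_le_sup (Tset_hub u z FM)); right; exists c.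
Qed.

Lemma Tu_upper F u z c : in_M F -> (forall t, u t <= z -> t <= c) ->
  Tu u F z <= F c.
Proof.
move=> FM H; rewrite TuE; apply: ge_sup; first exact: Tset_n0.
move=> e [->|[t ut <-]]; first by case: (inM01 FM c).
by case: FM => mo _; apply: mo; apply: H.
Qed.

Lemma Tu_zero F u z : (forall t, u t <= z -> F t = 0) -> Tu u F z = 0.
Proof.
move=> H; rewrite TuE; apply/le_anti/andP; split.
- apply: ge_sup; first exact: Tset_n0.
  by move=> e [->|[t ut <-]] //; rewrite H.
- have hub : has_ubound (Tset F u z).
    by exists 0; move=> e [->|[t ut <-]] //; rewrite H.
  by apply: (ub_le_sup hub); left.
Qed.

Lemma Tu_eq F u z c : in_M F -> (forall t, u t <= z <-> t <= c) ->
  Tu u F z = F c.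
Proof.
move=> FM H; apply/le_anti/andP; split.
- by apply: Tu_upper => // t /H.
- by apply: Tu_lower => //; apply/H.
Qed.

Lemma Tu_all F u z : in_M F -> (forall t, u t <= z) -> Tu u F z = 1.
Proof.
move=> FM H; apply/le_anti/andP; split; first exact: Tu_le1.
have [_ [_ [a [b [_ Hb]]]]] := FM.
by rewrite -(Hb b) //; apply: Tu_lower.
Qed.

Lemma level_sets u z : utility u ->
  (forall t, z < u t) \/ (forall t, u t <= z) \/
  exists c, forall t, u t <= z <-> t <= c.
Proof.
move=> [mo uc].
have [[t0 ht0]|N1] := pselect (exists t, u t <= z); last first.
  by left => t; rewrite ltNge; apply/negP => H; apply: N1; exists t.
have [[s0 hs0]|N2] := pselect (exists s, z < u s); last first.
  by right; left => t; rewrite leNgt; apply/negP => H; apply: N2; exists t.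
right; right.
pose A := [set t | u t <= z].
have hubA : has_ubound A.
  exists s0 => t At; rewrite leNgt; apply/negP => st.
  have := mo _ _ (ltW st); rewrite /A /= in At; lra.
have hsA : has_sup A by split => //; exists t0.
exists (sup A) => t; split.
- by move=> ut; apply: (ub_le_sup hubA).
- move=> tc; apply: (le_trans (mo _ _ tc)).
  rewrite leNgt; apply/negP => zc.
  have zc' : 0 < u (sup A) - z by rewrite subr_gt0.
  have [d d0 Hd] := cont_ed (sup A) uc _ zc'.
  have [s As ss] := sup_adherent d0 hsA.
  have sle : s <= sup A by apply: (ub_le_sup hubA).
  have := Hd s; rewrite ger0_norm ?subr_ge0 // => /(_ ltac:(lra)).
  rewrite ltr_distl /A /= in As *; lra.
Qed.


Definition mon01 (phi : R -> R) :=
  forall p q, 0 <= p -> p <= q -> q <= 1 -> phi p <= phi q.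

Lemma rc_empty F u phi z : in_M F -> utility u -> (forall t, z < u t) ->
  rlim (phi \o Tu u F) z (phi 0).
Proof.
move=> FM [mo _] H e e0.
have [_ [_ [a [b [Ha _]]]]] := FM.
have D0 : 0 < u a - z by rewrite subr_gt0.
exists (u a - z) => // w zw wD /=.
rewrite Tu_zero ?subrr ?normr0 // => t ut; apply: Ha.
rewrite ltNge; apply/negP => /mo; lra.
Qed.

Lemma rc_all F u phi z : in_M F -> (forall t, u t <= z) ->
  rlim (phi \o Tu u F) z (phi 1).
Proof.
move=> FM H e e0; exists 1 => // w zw _ /=.
rewrite Tu_all ?subrr ?normr0 // => t; apply: le_trans (H t) _; exact: ltW.
Qed.

Lemma rc_c F u phi z c L : in_M F -> utility u -> mon01 phi ->
  (forall t, u t <= z <-> t <= c) -> rlim (phi \o F) c L ->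
  rlim (phi \o Tu u F) z L.
Proof.
move=> FM [mo uc] phim H HL e e0.
have [d d0 Hd] := HL e e0.
pose c2 := c + d / 2.
have zc2 : z < u c2.
  by rewrite ltNge; apply/negP => /H; rewrite /c2; lra.
have D0 : 0 < u c2 - z by rewrite subr_gt0.
exists (u c2 - z) => // w zw wD /=.
have uz : u c <= z by apply/H.
have wz0 : 0 < w - z by rewrite subr_gt0.
have [eta eta0 Heta] := cont_ed c uc _ wz0.
pose m := Num.min eta (d / 2).
have m0 : 0 < m by rewrite lt_min eta0 /=; lra.
have m1 : m <= eta by rewrite ge_min lexx.
have m2 : m <= d / 2 by rewrite ge_min lexx orbT.
pose c1 := c + m / 2.
have uc1 : u c1 <= w.
  have := Heta c1; rewrite /c1 opprD addrA subrr add0r normrN ger0_norm; last lra.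
  move=> /(_ ltac:(lra)); rewrite ltr_distl; lra.
have hc2 : forall t, u t <= w -> t <= c2.
  move=> t ut; rewrite leNgt; apply/negP => /ltW /mo; lra.
have lo : F c1 <= Tu u F w by apply: Tu_lower.
have hi : Tu u F w <= F c2 by apply: Tu_upper.
have [F1a F1b] := inM01 FM c1.
have [F2a F2b] := inM01 FM c2.
have [H1a H1b] : 0 <= Tu u F w /\ Tu u F w <= 1 by split; [apply: Tu_ge0|apply: Tu_le1].
have p1 := phim _ _ F1a lo H1b.
have p2 := phim _ _ H1a hi F2b.
have := Hd c1; rewrite /c1 /= => /(_ ltac:(lra) ltac:(lra)).
have := Hd c2; rewrite /c2 /= => /(_ ltac:(lra) ltac:(lra)).
rewrite !ltr_distl; lra.
Qed.

Lemma rcF F t : in_M F -> rlim F t (F t).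
Proof. by move=> [_ [rc _]]; apply/rlimP; apply: rc. Qed.

Lemma TuM F u : in_M F -> utility u -> in_M (Tu u F).
Proof.
move=> FM [mo uc]; split; [|split].
- move=> z1 z2 z12; rewrite [X in X <= _]TuE; apply: ge_sup; first exact: Tset_n0.
  move=> e [->|[t ut <-]]; first exact: Tu_ge0.
  by apply: Tu_lower => //; apply: le_trans ut z12.
- move=> z; apply/rlimP.
  have idm : mon01 id by move=> p q _ pq _.
  have [H|[H|[c H]]] := level_sets z (conj mo uc).
  + have -> : Tu u F z = 0.
      by apply: Tu_zero => t ut; have := H t; rewrite ltNge ut.
    exact: (@rc_empty F u id z FM (conj mo uc) H).
  + rewrite Tu_all //; exact: (@rc_all F u id z FM H).
  + rewrite (Tu_eq _ _ _ FM H).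
    exact: (@rc_c F u id z c (F c) FM (conj mo uc) idm H (rcF c FM)).
- have [_ [_ [a [b [Ha Hb]]]]] := FM.
  exists (u a), (u b); split => z hz.
  + apply: Tu_zero => t ut; apply: Ha; rewrite ltNge; apply/negP => /mo; lra.
  + apply/le_anti/andP; split; first exact: Tu_le1.
    by rewrite -{1}(Hb b) //; apply: Tu_lower.
Qed.


Definition stp (p q t : R) : R :=
  if t < 0 then 0 else if t < 1 then p else if t < 2 then q else 1.

Lemma rlim_const f t : (exists2 d : R, 0 < d & forall y, t < y -> y < t + d -> f y = f t) ->
  rlim f t (f t).
Proof.
move=> [d d0 Hd] e e0; exists d => // y ty yd.
by rewrite Hd // subrr normr0.
Qed.

Lemma stpM (p q : R) : 0 <= p -> p <= q -> q <= 1 -> in_M (stp p q).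
Proof.
move=> p0 pq q1; split; [|split].
- move=> s t st; rewrite /stp; splitif; lra.
- move=> t; apply/rlimP; apply: rlim_const.
  have [t0|t0] := ltP t 0.
    exists (- t); first lra.
    by move=> y ty yd; rewrite /stp; splitif => //; lra.
  have [t1|t1] := ltP t 1.
    exists (1 - t); first lra.
    by move=> y ty yd; rewrite /stp; splitif => //; lra.
  have [t2|t2] := ltP t 2.
    exists (2 - t); first lra.
    by move=> y ty yd; rewrite /stp; splitif => //; lra.
  exists 1; first lra.
  by move=> y ty yd; rewrite /stp; splitif => //; lra.
- exists 0, 2; split => t ht; rewrite /stp; splitif => //; lra.
Qed.

Definition Sg F (x t : R) : R :=
  if t <= x then F t else if t < x + 1 then F x else F (t - 1).

Lemma SgM F x : in_M F -> in_M (Sg F x).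
Proof.
move=> FM; have FM' := FM; move: FM' => [mo [rc [a [b [Ha Hb]]]]].
split; [|split].
- move=> s t st; rewrite /Sg; splitif; apply: mo; lra.
- move=> t; apply/rlimP.
  have [tx|tx] := ltP t x.
    have [d d0 Hd] := rcF t FM 1 ltr01.
    move=> e e0; have [d' d'0 Hd'] := rcF t FM e e0.
    pose m := Num.min d' (x - t).
    have m0 : 0 < m by rewrite lt_min d'0 /=; lra.
    have m1 : m <= d' by rewrite ge_min lexx.
    have m2 : m <= x - t by rewrite ge_min lexx orbT.
    exists m => // y ty ym.
    have yd1 : y < t + d' by lra.
    have yd2 : y < x by lra.
    rewrite /Sg; splitif; try lra.
    apply: Hd' => //; lra.
  have [tx1|tx1] := ltP t (x + 1).
    apply: rlim_const; exists (x + 1 - t); first lra.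
    move=> y ty yd; rewrite /Sg; splitif => //; try lra.
    by have -> : t = x by lra.
  move=> e e0; have [d d0 Hd] := rcF (t - 1) FM e e0.
  exists d => // y ty yd.
  rewrite /Sg; splitif; try lra.
  apply: Hd; lra.
- exists a, (b + 1); split => t ht; rewrite /Sg; splitif;
    first [apply: Ha | apply: Hb]; lra.
Qed.

Definition ug (x t : R) : R := if t <= x then t else if t <= x + 1 then x else t - 1.
Definition uc (x t : R) : R := if t <= x then 0 else if t <= x + 1 then t - x else 1.

Lemma lip_util u : (forall s t, s <= t -> u s <= u t /\ u t - u s <= t - s) ->
  utility u.
Proof.
move=> H; split; first by move=> s t /H [].
move=> c; apply/cvgrPdist_lt => e e0.
apply/nbhs_ballP; exists e => // s /=; rewrite /ball /=.
have [cs|sc] := leP c s.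
  have [h1 h2] := H _ _ cs.
  rewrite distrC ger0_norm ?subr_ge0 // distrC ger0_norm ?subr_ge0 //; lra.
have [h1 h2] := H _ _ (ltW sc).
rewrite ger0_norm ?subr_ge0 ?ltW // ger0_norm ?subr_ge0 //; lra.
Qed.

Lemma ug_util x : utility (ug x).
Proof. apply: lip_util => s t st; rewrite /ug; splitif; lra. Qed.

Lemma uc_util x : utility (uc x).
Proof. apply: lip_util => s t st; rewrite /uc; splitif; lra. Qed.

Lemma cst_util (k : R) : utility (fun _ => k).
Proof. split; first by move=> ? ? _; rewrite lexx. exact: cst_continuous. Qed.

Lemma TuS F x : in_M F -> Tu (ug x) (Sg F x) = F.
Proof.
move=> FM; apply/funext => z.
have SM := SgM x FM.
have [zx|zx] := ltP z x.
  rewrite (@Tu_eq _ _ z z SM).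
    by rewrite /Sg; splitif => //; lra.
  by move=> t; rewrite /ug; splitif; split; lra.
rewrite (@Tu_eq _ _ z (z + 1) SM).
  by rewrite /Sg; splitif; try lra; rewrite addrK.
by move=> t; rewrite /ug; splitif; split; lra.
Qed.

Lemma TuC F x : in_M F -> Tu (uc x) (Sg F x) = stp (F x) 1.
Proof.
move=> FM; apply/funext => z.
have SM := SgM x FM.
have [z0|z0] := ltP z 0.
  rewrite Tu_zero; first by rewrite /stp z0.
  by move=> t; rewrite /uc; splitif; lra.
have [z1|z1] := ltP z 1.
  rewrite (@Tu_eq _ _ z (x + z) SM).
    rewrite /Sg /stp; splitif; try lra.
    have -> : z = 0 by lra.
    by rewrite addr0.
  by move=> t; rewrite /uc; splitif; split; lra.
rewrite Tu_all //; first by rewrite /stp; splitif => //; lra.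
by move=> t; rewrite /uc; splitif; lra.
Qed.


Section Main.
Variable T : (R -> R) -> (R -> R).
Hypothesis TM : forall F : R -> R, in_M F -> in_M (T F).

Section Forward.
Hypothesis H : forall u : R -> R, utility u ->
     forall F : R -> R, in_M F -> T (Tu u F) = Tu u (T F).

Let d (q : R) := T (stp q 1) 0.

Lemma key F y : in_M F -> d (F y) <= T F y /\ forall z, z < y -> T F z <= d (F y).
Proof.
move=> FM.
have SM : in_M (Sg F y) by apply: SgM.
have TSM : in_M (T (Sg F y)) by apply: TM.
have e1 := H (ug_util y) SM; rewrite TuS // in e1.
have e2 := H (uc_util y) SM; rewrite TuC // in e2.
have hd : d (F y) = T (Sg F y) y.
  rewrite /d e2; apply: Tu_eq => // t; rewrite /uc; splitif; split; lra.
have hy : T F y = T (Sg F y) (y + 1).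
  rewrite e1; apply: Tu_eq => // t; rewrite /ug; splitif; split; lra.
have hz : forall z, z < y -> T F z = T (Sg F y) z.
  move=> z zy; rewrite e1; apply: Tu_eq => // t; rewrite /ug; splitif; split; lra.
have [mo _] := TSM.
split.
- by rewrite hd hy; apply: mo; lra.
- by move=> z zy; rewrite hd hz //; apply: mo; lra.
Qed.

Lemma fwd : exists d, distortion d /\ forall F, in_M F -> T F = Td d F.
Proof.
exists d; split; [split; [|split; [|split]]|].
- move=> p q; rewrite !in_itv /= => /andP[p0 p1] /andP[q0 q1] pq.
  have FM := @stpM p q p0 pq q1.
  have [k1 _] := key 0 FM.
  have [_ k2] := key 1 FM.
  have := k2 0 ltr01.
  have E0 : stp p q 0 = p by rewrite /stp; splitif; lra.
  have E1 : stp p q 1 = q by rewrite /stp; splitif; lra.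
  rewrite E0 E1 in k1 *; lra.
- move=> p; rewrite !in_itv /= => /andP[p0 p1].
  have FM := @stpM p 1 p0 p1 (lexx 1).
  have TFM : in_M (T (stp p 1)) by apply: TM.
  by have [a b] := inM01 TFM 0; apply/andP.
- have FM := @stpM 0 1 (lexx 0) ler01 (lexx 1).
  have e : Tu (fun _ => 1) (stp 0 1) = stp 0 1.
    apply/funext => z; have [z1|z1] := ltP z 1.
      rewrite Tu_zero; first by rewrite /stp; splitif; lra.
      by move=> t; lra.
    rewrite Tu_all //; first by rewrite /stp; splitif; lra.
  have := H (cst_util 1) FM; rewrite e /d => ->.
  by apply: Tu_zero => t; lra.
- have FM := @stpM 1 1 ler01 (lexx 1) (lexx 1).
  have e : Tu (fun _ => 0) (stp 1 1) = stp 1 1.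
    apply/funext => z; have [z1|z1] := ltP z 0.
      rewrite Tu_zero; first by rewrite /stp; splitif; lra.
      by move=> t; lra.
    rewrite Tu_all //; first by rewrite /stp; splitif; lra.
  have := H (cst_util 0) FM; rewrite e /d => ->.
  by apply: Tu_all => //; apply: TM.
- move=> F FM; apply/funext => x; rewrite /Td.
  have TFM : in_M (T F) by apply: TM.
  apply/esym/cvg_lim => //; apply/rlimP => e e0.
  have [del del0 Hdel] := rcF x TFM e e0.
  exists del => // y xy yd.
  have [k1 _] := key y FM.
  have [_ k2] := key y FM.
  have := k2 x xy; have := Hdel y xy yd; rewrite /= !ltr_distl; lra.
Qed.

End Forward.

Section Backward.
Variable d : R -> R.
Hypothesis dd : distortion d.
Hypothesis HT : forall F, in_M F -> T F = Td d F.

Lemma bwd u : utility u -> forall F, in_M F -> T (Tu u F) = Tu u (T F).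
Proof.
move=> uu F FM.
have [dmo [dval [d0 d1]]] := dd.
have phim : mon01 d.
  move=> p q p0 pq q1; apply: dmo => //; rewrite in_itv /=; apply/andP; split => //; lra.
have dF0 : forall t, 0 <= d (F t).
  move=> t; have [a b] := inM01 FM t.
  by have := dval (F t); rewrite !in_itv /= a b => /(_ isT) /andP[].
have HM : in_M (Tu u F) by apply: TuM.
have GM : in_M (Td d F) by rewrite -HT //; apply: TM.
rewrite (HT HM) (HT FM).
apply/funext => z.
rewrite {1}/Td.
apply: cvg_lim => //; apply/rlimP.
have [Hz|[Hz|[c Hz]]] := level_sets z uu.
- have -> : Tu u (Td d F) z = d 0.
    by rewrite d0; apply: Tu_zero => t ut; have := Hz t; rewrite ltNge ut.
  exact: (@rc_empty F u d z FM uu Hz).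
- have -> : Tu u (Td d F) z = d 1 by rewrite d1; apply: Tu_all.
  exact: (@rc_all F u d z FM Hz).
- have -> : Tu u (Td d F) z = Td d F c by apply: Tu_eq.
  apply: (@rc_c F u d z c _ FM uu phim Hz).
  apply/rlimP; rewrite /Td.
  have : cvg ((d \o F) x @[x --> c^'+]).
    apply: nondecreasing_at_right_is_cvgr.
    + apply: nearW => x0 s t _ _ st /=.
      have [a1 b1] := inM01 FM s; have [a2 b2] := inM01 FM t.
      have [mo _] := FM.
      by apply: phim => //; apply: mo.
    + by apply: nearW => x0; exists 0 => _ [t _ <-]; apply: dF0.
  by [].
Qed.

End Backward.

End Main.

End Aux.

Theorem theorem1 (R : realType) (T : (R -> R) -> (R -> R))
  (TM : forall F : R -> R, in_M F -> in_M (T F)) :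
  (forall u : R -> R, utility u ->
     forall F : R -> R, in_M F -> T (Tu u F) = Tu u (T F)) <->
  (exists d : R -> R, distortion d /\ forall F : R -> R, in_M F -> T F = Td d F).
Proof.
split.
- by move=> H; apply: fwd.
- move=> [d [dd HT]] u uu F FM.
  exact: (bwd T TM dd HT uu FM).
Qed.
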